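(* Let $G$ be a finite connected graph in which every half-edge is labeled with exactly one label from $\{\mathsf{U},\mathsf{D},\mathsf{L},\mathsf{R}\}$ such that every node satisfies the following constraints: (a) any two edges incident to a node $u$ have different labels at $u$; (b) for every edge $e=\{u,v\}$, $L_u(e)=\mathsf{L}$ iff $L_v(e)=\mathsf{R}$; (c) for every edge $e=\{u,v\}$, $L_u(e)=\mathsf{U}$ iff $L_v(e)=\mathsf{D}$; (d) if $u$ has incident half-edges labeled $\mathsf{R}$ and $\mathsf{U}$, then $f_u(\mathsf{R},\mathsf{U},\mathsf{L},\mathsf{D})=u$; (e) if $f_u(\mathsf{R})$ exists, then $u$ has an incident half-edge labeled $\mathsf{D}$ (resp. $\mathsf{U}$) iff $f_u(\mathsf{R})$ has one; (f) if $f_u(\mathsf{U})$ exists, then $u$ has an incident half-edge labeled $\mathsf{L}$ (resp. $\mathsf{R}$) iff $f_u(\mathsf{U})$ has one. Assume moreover that some node has no incident half-edge labeled $\mathsf{D}$ (or some node has none labeled $\mathsf{U}$), and that some node has no incident half-edge labeled $\mathsf{L}$ (or some node has none labeled $\mathsf{R}$). Then $G$ is a grid structure.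
   Context: $L_u(e)$ denotes the label of half-edge $(u,e)$. For a node $u$ and labels $L_1,\dots,L_k$, $f_u(L_1,\dots,L_k)$ is the endpoint $v_{k+1}$ of the path $u=v_1,v_2,\dots,v_{k+1}$ where $v_{i+1}$ is reached from $v_i$ via the edge $e_i$ with $L_{v_i}(e_i)=L_i$, if this path exists and is unique; otherwise $f_u(L_1,\dots,L_k)=\bot$ (''exists'' means $\neq\bot$). A graph is a grid structure of size $h\times w$ if its nodes can be assigned (distinct) coordinates $(x_u,y_u)$ with $0\le x_u<w$, $0\le y_u<h$ such that for nodes $u,v$ with $x_v\le x_u$, $y_v\le y_u$ there is an edge $\{u,v\}$ iff $(x_u,y_u)=(x_v+1,y_v)$ or $(x_u,y_u)=(x_v,y_v+1)$. *)

(* Defs.v *)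
From mathcomp Require Import all_boot.
Set Implicit Arguments. Unset Strict Implicit. Unset Printing Implicit Defensive.

Inductive label := lU | lD | lL | lR.

Section Labeled.
Variables (V : finType) (adj : rel V) (lab : V -> V -> label).
(* adj : simple graph (symmetric, irreflexive); lab u v = label of the
   half-edge (u, {u,v}) at u, meaningful when adj u v. *)

Definition step (l : label) (u v : V) : Prop := adj u v /\ lab u v = l.

(* lpath u ls p : p = [v2; ...; v_{k+1}] is a path from u = v1 following
   labels ls = [L1; ...; Lk] *)
Fixpoint lpath (u : V) (ls : seq label) (p : seq V) : Prop :=
  match ls, p with
  | [::], [::] => True
  | l :: ls', w :: p' => step l u w /\ lpath w ls' p'
  | _, _ => False
  end.

(* f_u(ls) = v : the path exists, is unique, and ends at v *)
Definition f_eq (u : V) (ls : seq label) (v : V) : Prop :=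
  exists p, [/\ lpath u ls p, last u p = v & forall q, lpath u ls q -> q = p].

Definition has_label (u : V) (l : label) : Prop := exists v, step l u v.

Definition valid_labeling : Prop :=
  (forall u v w, adj u v -> adj u w -> v != w -> lab u v <> lab u w) /\
  (forall u v, adj u v -> (lab u v = lL <-> lab v u = lR)) /\
  (forall u v, adj u v -> (lab u v = lU <-> lab v u = lD)) /\
  (forall u, has_label u lR -> has_label u lU ->
     f_eq u [:: lR; lU; lL; lD] u) /\
  (forall u v, f_eq u [:: lR] v ->
     (has_label u lD <-> has_label v lD) /\
     (has_label u lU <-> has_label v lU)) /\
  (forall u v, f_eq u [:: lU] v ->
     (has_label u lL <-> has_label v lL) /\
     (has_label u lR <-> has_label v lR)).

End Labeled.

Definition grid_structure_of_size (V : finType) (adj : rel V) (h w : nat) : Prop :=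
  exists (x y : V -> nat),
    [/\ forall u v, x u = x v -> y u = y v -> u = v,
        forall u, x u < w /\ y u < h
      & forall u v, x v <= x u -> y v <= y u ->
          (adj u v <-> ((x u = (x v).+1 /\ y u = y v) \/
                        (x u = x v /\ y u = (y v).+1)))].

Definition grid_structure (V : finType) (adj : rel V) : Prop :=
  exists h w, grid_structure_of_size adj h w.

(* Main.v *)
Require Import Defs.
From mathcomp Require Import all_boot.
From Stdlib Require Import Classical.
Set Implicit Arguments. Unset Strict Implicit. Unset Printing Implicit Defensive.

Definition leqb (a b : label) : bool :=
  match a, b with lU, lU | lD, lD | lL, lL | lR, lR => true | _, _ => false end.
Lemma leqbP a b : reflect (a = b) (leqb a b).
Proof. by case: a; case: b; constructor. Qed.

Section Spec.
Variables (V : finType) (adj : rel V) (lab : V -> V -> label).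
Hypothesis Hsym : symmetric adj.
Hypothesis Hval : valid_labeling adj lab.

Definition r l u v := adj u v && leqb (lab u v) l.

Lemma rP l u v : reflect (step adj lab l u v) (r l u v).
Proof.
rewrite /r /step; apply: (iffP andP) => [[h1 /leqbP h2]|[h1 h2]]; split=> //.
exact/leqbP.
Qed.

Lemma hasP u l : reflect (has_label adj lab u l) [exists v, r l u v].
Proof.
apply: (iffP existsP) => [[v /rP h]|[v h]]; exists v => //; exact/rP.
Qed.

Lemma r_fun l u v w : r l u v -> r l u w -> v = w.
Proof.
case: Hval => Ha _ /andP [h1 /leqbP h2] /andP [h3 /leqbP h4].
case: (eqVneq v w) => // ne; exfalso; apply: (Ha u v w h1 h3 ne); congruence.
Qed.

Lemma rLR u v : r lL u v = r lR v u.
Proof.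
case: Hval => _ [Hb _]; rewrite /r Hsym.
case h: (adj v u) => //=; rewrite Hsym in h.
by have [h1 h2] := Hb _ _ h; apply/leqbP/leqbP.
Qed.

Lemma rDU u v : r lD u v = r lU v u.
Proof.
case: Hval => _ [_ [Hc _]]; rewrite /r Hsym.
case h: (adj v u) => //=.
by have [h1 h2] := Hc v u h; apply/leqbP/leqbP.
Qed.

Lemma r_injL u v w : r lL u w -> r lL v w -> u = v.
Proof. rewrite !rLR; exact: r_fun. Qed.
Lemma r_injD u v w : r lD u w -> r lD v w -> u = v.
Proof. rewrite !rDU; exact: r_fun. Qed.

Lemma f_eq1 l u v : r l u v -> f_eq adj lab u [:: l] v.
Proof.
move=> h; exists [:: v]; split.
- by split=> //; exact/rP.
- by [].
- case=> [//|w [|x q]] /=; last by case.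
  by case=> /rP h' _; rewrite (r_fun h h').
Qed.

Lemma constL u b : r lD u b -> [exists v, r lL u v] = [exists v, r lL b v].
Proof.
case: Hval => _ [_ [_ [_ [_ Hf]]]] h.
rewrite rDU in h; have [e _] := Hf _ _ (f_eq1 h).
by apply/hasP/hasP; apply e.
Qed.

Lemma constD u a : r lL u a -> [exists v, r lD u v] = [exists v, r lD a v].
Proof.
case: Hval => _ [_ [_ [_ [He _]]]] h.
rewrite rLR in h; have [e _] := He _ _ (f_eq1 h).
by apply/hasP/hasP; apply e.
Qed.

Lemma commLD u a b : r lL u a -> r lD u b -> exists c, r lL b c /\ r lD a c.
Proof.
case: Hval => _ [_ [_ [Hd [He Hf]]]] hua hub.
have hbu : r lU b u by rewrite -rDU.
have [e _] := Hf _ _ (f_eq1 hbu).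
have /hasP [c /rP hbc] : [exists v, r lL b v] by apply/hasP; apply e; apply/hasP/existsP; exists a.
exists c; split => //.
have hcb : r lR c b by rewrite -rLR.
have [_ e2] := He _ _ (f_eq1 hcb).
have hU : has_label adj lab c lU by apply e2; apply/hasP/existsP; exists u.
have hR : has_label adj lab c lR by apply/hasP/existsP; exists b.
have [p [pth pl _]] := Hd c hR hU.
case: p pth pl => [|p1 [|p2 [|p3 [|p4 [|p5 q]]]]] /=; try by intuition.
move=> [/rP s1 [/rP s2 [/rP s3 [/rP s4 _]]]] pl.
rewrite -(r_fun hcb s1) in s2; rewrite -(r_fun hbu s2) in s3.
by rewrite -(r_fun hua s3) pl in s4.
Qed.

Lemma commDL u a b : r lD u a -> r lL u b -> exists c, r lD b c /\ r lL a c.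
Proof. move=> h1 h2; have [c [h3 h4]] := commLD h2 h1; by exists c. Qed.

Lemma edgeLD u v : adj u v -> [\/ r lL u v, r lL v u, r lD u v | r lD v u].
Proof.
move=> h; case e: (lab u v).
- by apply: Or44; rewrite rDU /r h e.
- by apply: Or43; rewrite /r h e.
- by apply: Or41; rewrite /r h e.
- by apply: Or42; rewrite rLR /r h e.
Qed.
End Spec.
Section Generic.
Variables (V : finType) (adj : rel V) (rA rB : rel V).
Hypothesis HAfun : forall u v w, rA u v -> rA u w -> v = w.
Hypothesis HAinj : forall u v w, rA u w -> rA v w -> u = v.
Hypothesis HAcomm : forall u a b, rA u a -> rB u b -> exists c, rA b c /\ rB a c.
Hypothesis HBconst : forall u b, rB u b -> [exists v, rA u v] = [exists v, rA b v].
Hypothesis Hconn : forall u v, connect adj u v.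
Hypothesis Hedge : forall u v, adj u v -> [\/ rA u v, rA v u, rB u v | rB v u].
Hypothesis Hmiss : (exists u, ~~ [exists v, rA u v]) \/ (exists u, ~~ [exists w, rA w u]).

Let hasA u := [exists v, rA u v].
Let Af u := odflt u [pick v | rA u v].

Lemma Af_eq u v : rA u v -> Af u = v.
Proof.
move=> h; rewrite /Af; case: pickP => [w hw|/(_ v)] /=; first exact: HAfun hw h.
by rewrite h.
Qed.

Lemma Af_id u : ~~ hasA u -> Af u = u.
Proof.
move/existsPn=> h; rewrite /Af; case: pickP => // w hw.
by rewrite (negbTE (h w)) in hw.
Qed.

Lemma hasA_Af u : hasA u -> rA u (Af u).
Proof. by case/existsP => v h; rewrite (Af_eq h). Qed.

Lemma comm_iter u v : rB u v -> forall n, rB (iter n Af u) (iter n Af v).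
Proof.
move=> huv; elim => [//|n IH] /=.
case hw: (hasA (iter n Af u)).
  have [c [h1 h2]] := HAcomm (hasA_Af hw) IH.
  by rewrite (Af_eq h1).
have hw' : hasA (iter n Af v) = false by rewrite -hw /hasA (HBconst IH).
by rewrite !Af_id ?hw ?hw'.
Qed.

Let W u := forall m, hasA (iter m Af u).

Lemma W_edge u v : adj u v -> W u -> W v.
Proof.
move=> /Hedge [h|h|h|h] Wu m.
- by have := Wu m.+1; rewrite iterSr (Af_eq h).
- case: m => [|m]; first by apply/existsP; exists u.
  by rewrite iterSr (Af_eq h).
- by rewrite /hasA -(HBconst (comm_iter h m)); apply: Wu.
- by rewrite /hasA (HBconst (comm_iter h m)); apply: Wu.
Qed.

Lemma W_none u : ~ W u.
Proof.
move=> Wu.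
have Wall : forall v, W v.
  move=> v; have /connectP [p pth ->] := Hconn u v.
  elim: p u pth Wu => [//|a p IH] u /= /andP [h1 h2] Wu.
  exact: IH h2 (W_edge h1 Wu).
have hall : forall v, hasA v by move=> v; apply: (Wall v 0).
case: Hmiss => [[w hw]|[w hw]]; first by have := hall w; rewrite /hasA (negbTE hw).
have inj : injective Af.
  move=> a b e; apply: (HAinj (hasA_Af (hall a))); rewrite e; exact: hasA_Af.
have [g _ gK] := injF_bij inj.
move/existsPn: hw => /(_ (g w)); rewrite -{2}(gK w) hasA_Af //.
Qed.

Lemma term u : exists m, ~~ hasA (iter m Af u).
Proof.
apply: NNPP => hn; apply: (W_none (u:=u)) => m.
apply: negbNE; apply/negP => hm; apply: hn; exists m; exact: hm.
Qed.

Let X u := ex_minn (term u).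

Lemma X0 u : (X u == 0) = ~~ hasA u.
Proof.
rewrite /X; case: ex_minnP => m h1 h2.
apply/idP/idP; first by move/eqP=> e; rewrite e in h1.
by move=> h; have := h2 0 h; rewrite leqn0.
Qed.

Lemma XA u v : rA u v -> X u = (X v).+1.
Proof.
move=> huv.
have e : forall m, iter m.+1 Af u = iter m Af v by move=> m; rewrite iterSr (Af_eq huv).
rewrite /X; case: ex_minnP => m h1 h2; case: ex_minnP => k k1 k2.
have hu : hasA u by apply/existsP; exists v.
case: m h1 h2 => [|m] h1 h2; first by rewrite /= hu in h1.
congr S; apply/eqP; rewrite eqn_leq; apply/andP; split.
  by rewrite -ltnS; apply: h2; rewrite e.
by apply: k2; rewrite -e.
Qed.

Lemma XB u v : rB u v -> X u = X v.
Proof.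
move=> huv.
have e : forall m, hasA (iter m Af u) = hasA (iter m Af v).
  by move=> m; apply: HBconst; apply: comm_iter.
rewrite /X; case: ex_minnP => m h1 h2; case: ex_minnP => k k1 k2.
apply/eqP; rewrite eqn_leq; apply/andP; split.
  by apply: h2; rewrite e.
by apply: k2; rewrite -e.
Qed.

Let AW u := iter (X u) Af u.

Lemma generic_coord : exists (X : V -> nat) (AW : V -> V),
  [/\ forall u, (X u == 0) = ~~ [exists v, rA u v],
      forall u v, rA u v -> X u = (X v).+1,
      forall u v, rB u v -> X u = X v &
      [/\ forall u v, rA u v -> AW u = AW v,
      forall u v, rB u v -> rB (AW u) (AW v) &
      forall u, ~~ [exists v, rA u v] -> AW u = u]].
Proof.
exists X, AW; split.
- exact: X0.
- exact: XA.
- exact: XB.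
split.
- by move=> u v h; rewrite /AW (XA h) iterSr (Af_eq h).
- by move=> u v h; rewrite /AW (XB h); apply: comm_iter.
- by move=> u h; rewrite /AW; move: h; rewrite -X0 => /eqP ->.
Qed.
End Generic.

Theorem lemma6p5 (V : finType) (adj : rel V) (lab : V -> V -> label) :
  symmetric adj -> irreflexive adj ->
  (forall u v : V, connect adj u v) ->
  valid_labeling adj lab ->
  ((exists u, ~ has_label adj lab u lD) \/ (exists u, ~ has_label adj lab u lU)) ->
  ((exists u, ~ has_label adj lab u lL) \/ (exists u, ~ has_label adj lab u lR)) ->
  grid_structure adj.
Proof.
move=> Hsym Hirr Hconn Hval HmD HmL.
have [x [LW [x0 xL xD [LWL LWD LW0]]]] :
  exists (X : V -> nat) (AW : V -> V),
  [/\ forall u : V, (X u == 0) = ~~ [exists v, r adj lab lL u v],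
      forall u v : V, r adj lab lL u v -> X u = (X v).+1,
      forall u v : V, r adj lab lD u v -> X u = X v
    & [/\ forall u v : V, r adj lab lL u v -> AW u = AW v,
          forall u v : V, r adj lab lD u v -> r adj lab lD (AW u) (AW v)
        & forall u : V, ~~ [exists v, r adj lab lL u v] -> AW u = u]].
  apply: (generic_coord _ _ _ _ Hconn).
  - exact: (@r_fun _ _ _ Hval _).
  - exact: (@r_injL _ _ _ Hsym Hval).
  - exact: (@commLD _ _ _ Hsym Hval).
  - exact: (@constL _ _ _ Hsym Hval).
  - exact: (@edgeLD _ _ _ Hsym Hval).
  - case: HmL => [[u hu]|[u hu]]; [left|right]; exists u.
      by apply/negP => /hasP.
    apply/negP => h; apply: hu; apply/hasP.
    by case/existsP: h => w; rewrite rLR // => h; apply/existsP; exists w.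
have [y [DW [y0 yD yL [DWD DWL DW0]]]] :
  exists (X : V -> nat) (AW : V -> V),
  [/\ forall u : V, (X u == 0) = ~~ [exists v, r adj lab lD u v],
      forall u v : V, r adj lab lD u v -> X u = (X v).+1,
      forall u v : V, r adj lab lL u v -> X u = X v
    & [/\ forall u v : V, r adj lab lD u v -> AW u = AW v,
          forall u v : V, r adj lab lL u v -> r adj lab lL (AW u) (AW v)
        & forall u : V, ~~ [exists v, r adj lab lD u v] -> AW u = u]].
  apply: (generic_coord _ _ _ _ Hconn).
  - exact: (@r_fun _ _ _ Hval _).
  - exact: (@r_injD _ _ _ Hsym Hval).
  - exact: (@commDL _ _ _ Hsym Hval).
  - exact: (@constD _ _ _ Hsym Hval).
  - by move=> u v /(edgeLD Hsym Hval) [h|h|h|h]; [apply: Or43|apply: Or44|apply: Or41|apply: Or42].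
  - case: HmD => [[u hu]|[u hu]]; [left|right]; exists u.
      by apply/negP => /hasP.
    apply/negP => h; apply: hu; apply/hasP.
    by case/existsP: h => w; rewrite rDU // => h; apply/existsP; exists w.
pose pi u := DW (LW u).
have pi_edge : forall u v, adj u v -> pi u = pi v.
  move=> u v /(edgeLD Hsym Hval) [h|h|h|h]; rewrite /pi.
  - by rewrite (LWL _ _ h).
  - by rewrite (LWL _ _ h).
  - by rewrite (DWD _ _ (LWD _ _ h)).
  - by rewrite (DWD _ _ (LWD _ _ h)).
have pi_const : forall u v, pi u = pi v.
  move=> u v; have /connectP [p pth ->] := Hconn u v.
  elim: p u pth => [//|a p IH] u /= /andP [h1 h2].
  by rewrite (pi_edge _ _ h1); apply: IH.
have corner : forall u, x u = 0 -> y u = 0 -> pi u = u.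
  move=> u /eqP hx /eqP hy; rewrite x0 in hx; rewrite y0 in hy.
  by rewrite /pi (LW0 _ hx) (DW0 _ hy).
have corner2 : forall u v, x u = 0 -> y u = 0 -> x v = 0 -> y v = 0 -> u = v.
  move=> u v h1 h2 h3 h4; by rewrite -(corner u h1 h2) -(corner v h3 h4).
have inj : forall n u v, x u + y u <= n -> x u = x v -> y u = y v -> u = v.
  elim=> [|n IH] u v hn ex ey.
    move: hn; rewrite leqn0 addn_eq0 => /andP [/eqP a /eqP b].
    by apply: corner2; rewrite // -?ex -?ey.
  case hxu: (x u == 0).
    case hyu: (y u == 0).
      by apply: corner2; apply/eqP; rewrite // -?ex -?ey.
    have /existsP [w hw] : [exists v, r adj lab lD u v] by apply/negbFE; rewrite -y0 hyu.
    have /existsP [w' hw'] : [exists v', r adj lab lD v v'] by apply/negbFE; rewrite -y0 -ey hyu.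
    have e : w = w'.
      apply: IH.
      - by move: hn; rewrite (yD _ _ hw) (xD _ _ hw) addnS ltnS.
      - by rewrite -(xD _ _ hw) -(xD _ _ hw').
      - by apply/eqP; rewrite -eqSS -(yD _ _ hw) -(yD _ _ hw') ey.
    by rewrite e in hw; apply: r_injD Hsym Hval _ _ _ hw hw'.
  have /existsP [w hw] : [exists v, r adj lab lL u v] by apply/negbFE; rewrite -x0 hxu.
  have /existsP [w' hw'] : [exists v', r adj lab lL v v'] by apply/negbFE; rewrite -x0 -ex hxu.
  have e : w = w'.
    apply: IH.
    - by move: hn; rewrite (yL _ _ hw) (xL _ _ hw) addSn ltnS.
    - by apply/eqP; rewrite -eqSS -(xL _ _ hw) -(xL _ _ hw') ex.
    - by rewrite -(yL _ _ hw) -(yL _ _ hw').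
  by rewrite e in hw; apply: r_injL Hsym Hval _ _ _ hw hw'.
have injxy : forall u v, x u = x v -> y u = y v -> u = v.
  by move=> u v; apply: (inj (x u + y u)).
exists (\max_u y u).+1, (\max_u x u).+1, x, y; split.
- exact: injxy.
- by move=> u; rewrite !ltnS !leq_bigmax.
move=> u v hx hy; split.
  move/(edgeLD Hsym Hval) => [h|h|h|h].
  - by left; rewrite (xL _ _ h) (yL _ _ h).
  - by move: hx; rewrite (xL _ _ h) ltnn.
  - by right; rewrite (xD _ _ h) (yD _ _ h).
  - by move: hy; rewrite (yD _ _ h) ltnn.
case=> [[e1 e2]|[e1 e2]].
  have /existsP [w hw] : [exists v, r adj lab lL u v] by apply/negbFE; rewrite -x0 e1.
  have ew : w = v.
    apply: injxy; last by rewrite -(yL _ _ hw).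
    by apply/eqP; rewrite -eqSS -(xL _ _ hw) e1.
  by rewrite -ew; case/andP: hw.
have /existsP [w hw] : [exists v, r adj lab lD u v] by apply/negbFE; rewrite -y0 e2.
have ew : w = v.
  apply: injxy; first by rewrite -(xD _ _ hw).
  by apply/eqP; rewrite -eqSS -(yD _ _ hw) e2.
by rewrite -ew; case/andP: hw.
Qed.
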